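(* Let $\Gamma$ be a cofinite graph and let $\overline{\Gamma}$ denote its (Hausdorff uniform) completion, which is again a cofinite graph. The following statements are equivalent: (1) $\Gamma$ is cofinitely connected; (2) $\Gamma$ is not the uniform sum of two disjoint nonempty subgraphs; (3) $\overline{\Gamma}$ is cofinitely connected.
   Context: A graph $\Gamma$ is a set $\Gamma=V(\Gamma)\sqcup E(\Gamma)$ (vertices and edges) together with maps $s,t\colon E(\Gamma)\to V(\Gamma)$ and an involution $e\mapsto\overline e$ of $E(\Gamma)$ without fixed points such that $s(\overline e)=t(e)$ and $t(\overline e)=s(e)$. A subgraph is a subset closed under $s$, $t$ and $e\mapsto \overline e$. An equivalence relation $R$ on a graph $\Gamma$ is compatible if $R\subseteq (V(\Gamma)\times V(\Gamma))\cup(E(\Gamma)\times E(\Gamma))$, $(e,e')\in R$ implies $(s(e),s(e')),(t(e),t(e')),(\overline e,\overline{e'})\in R$, and $(e,\overline e)\notin R$ for every edge $e$; then the quotient $\Gamma/R$ is a graph. A cofinite entourage of a uniform space is an entourage that is an equivalence relation with finitely many equivalence classes. A cofinite graph is a graph equipped with a Hausdorff uniform structure in which the compatible cofinite entourages form a fundamental system of entourages. A path in a graph is a finite sequence of edges $e_1\cdots e_n$ with $t(e_i)=s(e_{i+1})$; a graph is path connected if any two vertices are joined by a path. A cofinite graph $\Gamma$ is cofinitely connected if $\Gamma/R$ is path connected for every compatible cofinite entourage $R$ of $\Gamma$. $\Gamma$ is the uniform sum of two disjoint subgraphs $\Gamma_1,\Gamma_2$ if $\Gamma=\Gamma_1\cup\Gamma_2$,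 $\Gamma_1\cap\Gamma_2=\emptyset$, and a subset $W\subseteq\Gamma\times\Gamma$ is an entourage of $\Gamma$ iff $W\supseteq W_1\cup W_2$ for some entourages $W_i$ of $\Gamma_i$ (with the subspace uniformities). *)

(* Defs.v *)
From HB Require Import structures.
From mathcomp Require Import all_boot all_order all_algebra.
From mathcomp Require Import all_classical all_reals all_analysis.

Set Implicit Arguments.
Unset Strict Implicit.
Unset Printing Implicit Defensive.

Local Open Scope classical_set_scope.

(** A graph on a carrier [T] (= V ⊔ E): [is_edge] selects E, the other
    elements are the vertices. [src], [tgt], [rev] are only meaningful on
    edges. *)
Record graph (T : Type) := Graph {
  is_edge : T -> Prop;
  src : T -> T;
  tgt : T -> T;
  rev : T -> T;
  graph_ax : forall e, is_edge e ->
    ~ is_edge (src e) /\ ~ is_edge (tgt e) /\ is_edge (rev e) /\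
    rev (rev e) = e /\ rev e <> e /\
    src (rev e) = tgt e /\ tgt (rev e) = src e
}.

Section CofiniteGraphs.
Variable T : uniformType.
Variable G : graph T.

Definition subgraph (A : set T) : Prop :=
  forall e, A e -> is_edge G e ->
    [/\ A (src G e), A (tgt G e) & A (rev G e)].

Definition equiv_rel (R : set (T * T)) : Prop :=
  [/\ forall x, R (x, x),
      (forall x y, R (x, y) -> R (y, x)) &
      (forall x y z, R (x, y) -> R (y, z) -> R (x, z))].

(** compatible equivalence relation (so that Γ/R is a graph) *)
Definition compatible (R : set (T * T)) : Prop :=
  [/\ equiv_rel R,
      (forall x y, R (x, y) -> (is_edge G x <-> is_edge G y)),
      (forall e e', is_edge G e -> R (e, e') ->
         [/\ R (src G e, src G e'), R (tgt G e, tgt G e')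
           & R (rev G e, rev G e')]) &
      (forall e, is_edge G e -> ~ R (e, rev G e))].

Definition cofinite_entourage (R : set (T * T)) : Prop :=
  [/\ entourage R, equiv_rel R &
      finite_set (range (fun x : T => [set y | R (x, y)]))].

Definition cofinite_graph : Prop :=
  hausdorff_space T /\
  forall W, entourage W ->
    exists R, [/\ cofinite_entourage R, compatible R & R `<=` W].

(** [qwalk R x es y]: the edge sequence [es] induces a path in Γ/R from the
    class of vertex [x] to the class of vertex [y] (edges of Γ/R are the
    R-classes of edges, with s[e] = [s e], t[e] = [t e]). *)
Fixpoint qwalk (R : set (T * T)) (x : T) (es : list T) (y : T) : Prop :=
  match es with
  | nil => R (x, y)
  | e :: es' => is_edge G e /\ R (x, src G e) /\ qwalk R (tgt G e) es' y
  end.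

Definition quotient_path_connected (R : set (T * T)) : Prop :=
  forall x y, ~ is_edge G x -> ~ is_edge G y -> exists es, qwalk R x es y.

Definition cofinitely_connected : Prop :=
  forall R, cofinite_entourage R -> compatible R -> quotient_path_connected R.

Definition sub_entourage (A : set T) (W : set (T * T)) : Prop :=
  exists2 V, entourage V & W = V `&` (A `*` A).

Definition uniform_sum (A1 A2 : set T) : Prop :=
  [/\ subgraph A1, subgraph A2, A1 `|` A2 = setT, A1 `&` A2 = set0 &
      forall W : set (T * T), entourage W <->
        exists W1 W2, [/\ sub_entourage A1 W1, sub_entourage A2 W2
                        & W1 `|` W2 `<=` W]].

End CofiniteGraphs.

(** [G'] on [T'] together with [i] is a (Hausdorff uniform) completion of the
    cofinite graph [G] on [T], carrying its (unique) cofinite graph structure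
    extending that of [G]: [i] is an injective graph morphism and a uniform
    embedding with dense image into a complete Hausdorff uniform space. *)
Definition is_completion (T T' : uniformType) (G : graph T) (G' : graph T')
    (i : T -> T') : Prop :=
  injective i /\
  [/\ (forall x, is_edge G' (i x) <-> is_edge G x),
      (forall e, is_edge G e ->
         [/\ i (src G e) = src G' (i e), i (tgt G e) = tgt G' (i e)
           & i (rev G e) = rev G' (i e)]) &
      (forall W : set (T * T), entourage W <->
         exists2 W' : set (T' * T'), entourage W' &
           forall x y, W' (i x, i y) -> W (x, y))] /\
  [/\ (forall (z : T') (W' : set (T' * T')), entourage W' ->
         exists x, W' (z, i x)),
      (forall F : set_system T', ProperFilter F -> cauchy F ->
         exists z : T', F --> z) &
      cofinite_graph G'].

(* Main.v *)
Require Import Defs.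
From HB Require Import structures.
From mathcomp Require Import all_boot all_order all_algebra.
From mathcomp Require Import all_classical all_reals all_analysis.

Local Open Scope classical_set_scope.

Section Aux.
Variable T : uniformType.
Variable G : graph T.

Lemma qwalk_snoc (R : set (T * T)) (x : T) (es : seq T) (v e : T) : Defs.equiv_rel R -> qwalk G R x es v ->
  is_edge G e -> R (v, src G e) -> qwalk G R x (es ++ [:: e]) (tgt G e).
Proof.
move=> [Rr Rs Rt]; elim: es x => [|f es IH] x /=.
  move=> Rxv He Rve; split=> //; split; [exact: Rt Rxv Rve | exact: Rr].
by move=> [Hf [Rxf Hw]] He Rve; split=> //; split=> //; exact: IH.
Qed.

Lemma qwalk_ends (R : set (T * T)) (a : T) (es : seq T) (b a0 b0 : T) : Defs.equiv_rel R -> qwalk G R a es b ->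
  R (a0, a) -> R (b, b0) -> qwalk G R a0 es b0.
Proof.
move=> [Rr Rs Rt]; elim: es a a0 => [|f es IH] a a0 /=.
  move=> Rab Ra Rb; exact: (Rt _ _ _ Ra (Rt _ _ _ Rab Rb)).
move=> [Hf [Raf Hw]] Ra Rb; split=> //; split; first exact: Rt Ra Raf.
exact: IH Hw (Rr _) Rb.
Qed.

Lemma qwalk_vert (R : set (T * T)) (a : T) (es : seq T) (b : T) : Defs.compatible G R -> ~ is_edge G a ->
  qwalk G R a es b -> ~ is_edge G b.
Proof.
move=> [_ Re _ _]; elim: es a => [|f es IH] a /=.
  by move=> ha Rab hb; apply: ha; apply/(Re _ _ Rab).
move=> _ [Hf [_ Hw]]; apply: IH Hw.
by have [_ [? _]] := graph_ax Hf.
Qed.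

End Aux.

Theorem mainTheorem1 (T : uniformType) (G : graph T) (T' : uniformType)
    (G' : graph T') (i : T -> T') :
  cofinite_graph G -> is_completion G G' i ->
  (cofinitely_connected G <->
     ~ (exists A1 A2 : set T,
          [/\ A1 !=set0, A2 !=set0 & uniform_sum G A1 A2])) /\
  (cofinitely_connected G <-> cofinitely_connected G').
Proof.
rewrite /cofinite_graph /is_completion.
move=> [_ Hcg] [inj [[Hedge Hmor Hunif] [Hdense _ [_ Hcg']]]].
split; split.
-
  move=> CC [A1 [A2 [[a1 Ha1] [a2 Ha2] [S1 S2 HU HD Hent]]]].
  have disj z : A1 z -> A2 z -> False.
    move=> h1 h2; have : (A1 `&` A2) z by split.
    by rewrite HD.
  have cov z : A1 z \/ A2 z.
    have : (A1 `|` A2) z by rewrite HU.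
    by [].
  pose R0 := [set p : T * T | (A1 p.1 /\ A1 p.2) \/ (A2 p.1 /\ A2 p.2)].
  have R0ent : entourage R0.
    apply/Hent; exists (A1 `*` A1), (A2 `*` A2); split.
    + by exists setT; [exact: entourageT | rewrite setTI].
    + by exists setT; [exact: entourageT | rewrite setTI].
    + by move=> [p q] [[/= ? ?]|[/= ? ?]]; [left|right].
  have [R [HRc HRcomp HRsub]] := Hcg R0 R0ent.
  have vert A a : subgraph G A -> A a -> exists x, A x /\ ~ is_edge G x.
    move=> SA Aa; have [He|He] := pselect (is_edge G a).
      have [? _ _] := SA a Aa He; exists (src G a); split=> //.
      by have [? _] := graph_ax He.
    by exists a.
  have [x [Ax hx]] := vert _ _ S1 Ha1.
  have [y [Ay hy]] := vert _ _ S2 Ha2.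
  have [es Hw] := CC R HRc HRcomp x y hx hy.
  suff : A1 y by move=> /disj; apply.
  elim: es x Ax {hx} Hw => [|e es IH] z Az /=.
    move=> /HRsub [[_ //]|[/disj]]; by [].
  move=> [He [Rzs Hw]]; apply: IH Hw.
  have As : A1 (src G e).
    by case: (HRsub _ Rzs) => [[]|[/(disj _ Az)]].
  case: (cov e) => Ae; first by have [] := S1 e Ae He.
  by have [/(disj _ As)] := S2 e Ae He.
-
  move=> N R [Rent Req Rfin] Rc x y hx hy.
  have [//|Hno] := pselect (exists es, qwalk G R x es y).
  exfalso; apply: N.
  have [Rr Rs Rt] := Req.
  have [_ Re Rsrc Rrev] := Rc.
  pose reach v := exists es, qwalk G R x es v.
  have reach_vert v : reach v -> ~ is_edge G v.
    by move=> [es Hw]; exact: qwalk_vert Rc hx Hw.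
  have reach_tgt e : is_edge G e -> reach (src G e) -> reach (tgt G e).
    by move=> He [es Hw]; exists (es ++ [:: e]); exact: qwalk_snoc Req Hw He (Rr _).
  have reach_R a b : reach a -> R (a, b) -> reach b.
    by move=> [es Hw] Rab; exists es; exact: qwalk_ends Req Hw (Rr _) Rab.
  pose A1 := [set v | reach v \/ (is_edge G v /\ reach (src G v))].
  pose A2 := ~` A1.
  have A1R a b : A1 a -> R (a, b) -> A1 b.
    move=> [ra|[ea ra]] Rab; first by left; exact: reach_R ra Rab.
    have eb : is_edge G b by apply/(Re _ _ Rab).
    have [Rs' _ _] := Rsrc _ _ ea Rab.
    by right; split=> //; exact: reach_R ra Rs'.
  have A2R a b : A2 a -> R (a, b) -> A2 b.
    by move=> Na Rab Ab; apply: Na; apply: A1R Ab (Rs _ _ Rab).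
  have A1e e : is_edge G e -> A1 e -> reach (src G e).
    by move=> He [/reach_vert //|[]].
  have rev_reach e : is_edge G e -> reach (tgt G e) -> reach (src G e).
    move=> He rt; have [_ [_ [Her [Hrr [_ [Hsr Htr]]]]]] := graph_ax He.
    rewrite -Htr; apply: reach_tgt => //; by rewrite Hsr.
  exists A1, A2; split.
  + by exists x; left; exists nil.
  + exists y => -[ry|[]//]; case: ry => es Hw; apply: Hno; by exists es.
  + split.
    * move=> e Ae He; have rs := A1e _ He Ae.
      have [_ [_ [Her [_ [_ [Hsr _]]]]]] := graph_ax He.
      split; first by left.
      - by left; exact: reach_tgt.
      - by right; split=> //; rewrite Hsr; exact: reach_tgt.
    * move=> e Ae He.
      have [hs [ht [Her [_ [_ [Hsr Htr]]]]]] := graph_ax He.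
      split.
      - move=> [rs|[]//]; apply: Ae; by right.
      - move=> [rt|[]//]; apply: Ae; right; split=> //; exact: rev_reach.
      - move=> /(A1e _ Her); rewrite Hsr => rt; apply: Ae; right; split=> //.
        exact: rev_reach.
    * by apply/seteqP; split=> z // _; have [h|h] := pselect (A1 z); [left|right].
    * by apply/seteqP; split=> z // [].
    * move=> W; split.
      - move=> HW; exists (W `&` (A1 `*` A1)), (W `&` (A2 `*` A2)); split.
        + by exists W.
        + by exists W.
        + by move=> p [[]|[]].
      - move=> [W1 [W2 [[V1 HV1 ->] [V2 HV2 ->] Hs]]].
        apply: filterS (filterI (filterI HV1 HV2) Rent).
        move=> [a b] [[v1 v2] Rab]; apply: Hs.
        have [Aa|Na] := pselect (A1 a).
          by left; split=> //; split=> //=; exact: A1R Aa Rab.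
        by right; split=> //; split=> //=; exact: A2R Na Rab.
-
  move=> CC R' [R'ent R'eq R'fin] R'c x' y' hx' hy'.
  have [R'r R's R't] := R'eq.
  have [_ R'e R'src R'rev] := R'c.
  pose R := [set p : T * T | R' (i p.1, i p.2)].
  have Req : Defs.equiv_rel R.
    split=> [a|a b|a b c] /=; [exact: R'r|exact: R's|exact: R't].
  have Rc : cofinite_entourage R.
    split=> //.
      by apply/Hunif; exists R'.
    apply: sub_finite_set (finite_image (fun C => i @^-1` C) R'fin).
    by move=> C [a _ <-]; exists [set y' | R' (i a, y')]; [exists (i a)|].
  have Rcomp : Defs.compatible G R.
    split=> //.
    + move=> a b /= Rab; rewrite -!Hedge; exact: R'e.
    + move=> e e' He /= Ree'.
      have He' : is_edge G e' by rewrite -Hedge -(R'e _ _ Ree') Hedge.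
      have [s1 t1 r1] := Hmor e He; have [s2 t2 r2] := Hmor e' He'.
      rewrite /R /= s1 t1 r1 s2 t2 r2; apply: R'src => //; by rewrite Hedge.
    + move=> e He; rewrite /R /=; have [_ _ ->] := Hmor e He.
      by apply: R'rev; rewrite Hedge.
  have [x Rx] := Hdense x' R' R'ent.
  have [y Ry] := Hdense y' R' R'ent.
  have hx : ~ is_edge G x by rewrite -Hedge -(R'e _ _ Rx).
  have hy : ~ is_edge G y by rewrite -Hedge -(R'e _ _ Ry).
  have [es Hw] := CC R Rc Rcomp x y hx hy.
  exists (map i es); apply: (@qwalk_ends _ G' R' _ _ _ _ _ R'eq _ Rx (R's _ _ Ry)).
  elim: es x {Rx hx} Hw => [|e es IH] z //= [He [Rzs Hw]].
  have [s1 t1 _] := Hmor e He.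
  split; first by rewrite Hedge.
  by split; [rewrite -s1 | rewrite -t1; exact: IH].
-
  move=> CC' R [Rent Req Rfin] Rc x y hx hy.
  have [W' HW'ent HW'] := (Hunif R).1 Rent.
  have [R' [R'c R'comp R'sub]] := Hcg' W' HW'ent.
  have R'c0 := R'c; case: R'c0 => [R'ent R'eq _].
  have [R'r R's R't] := R'eq.
  have [_ R'e R'src _] := R'comp.
  have back z1 z2 : R' (i z1, i z2) -> R (z1, z2) by move=> /R'sub /HW'.
  have hix : ~ is_edge G' (i x) by rewrite Hedge.
  have hiy : ~ is_edge G' (i y) by rewrite Hedge.
  have [es' Hw'] := CC' R' R'c R'comp (i x) (i y) hix hiy.
  suff : forall es' w' z, R' (i z, w') -> qwalk G' R' w' es' (i y) ->
      exists es, qwalk G R z es y by apply; [exact: R'r|exact: Hw'].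
  elim=> [|e' es IH] w' z /= Rz.
    by move=> Rw; exists nil; apply: back; exact: R't Rz Rw.
  move=> [He' [Rws Hw]].
  have [e Re] := Hdense e' R' R'ent.
  have He : is_edge G e by rewrite -Hedge -(R'e _ _ Re).
  have [s1 t1 _] := Hmor e He.
  have [Rs Rt _] := R'src _ _ He' Re.
  have Rt' : R' (i (tgt G e), tgt G' e') by rewrite t1; exact: R's.
  have [es2 Hw2] := IH (tgt G' e') (tgt G e) Rt' Hw.
  exists (e :: es2); split=> //; split=> //.
  apply: back; rewrite s1; exact: (R't _ _ _ Rz (R't _ _ _ Rws Rs)).
Qed.
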